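(* Write $\mathbb{R}^4=\mathbb{R}^3\times\mathbb{R}$ and for $S\in SO(3)$ let $\Sigma_S$ be the linear map $(\mathbf{x},x^4)\mapsto(S\mathbf{x},x^4)$; let $SO_4(3)=\{\Sigma_S:S\in SO(3)\}$. An additive subgroup $\Lambda$ of $\mathbb{R}^4$ satisfies $\Sigma_S(\Lambda)\subseteq\Lambda$ for all $S\in SO(3)$ if and only if $\Lambda=\{\mathbf{0}\}\times H$ or $\Lambda=\mathbb{R}^3\times H$ for some additive subgroup $H$ of $\mathbb{R}$. *)

(* Defs.v *)
From HB Require Import structures.
From mathcomp Require Import all_boot all_order all_algebra.
From mathcomp Require Import reals.
Set Implicit Arguments. Unset Strict Implicit. Unset Printing Implicit Defensive.
Import Order.TTheory GRing.Theory Num.Theory.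
Local Open Scope ring_scope.

Definition add_subgroup (V : zmodType) (A : V -> Prop) : Prop :=
  A 0 /\ (forall x y, A x -> A y -> A (x - y)).

Definition SO3 (R : numDomainType) (S : 'M[R]_3) : Prop :=
  S^T *m S = 1%:M /\ \det S = 1.

Definition Sigma (R : numDomainType) (S : 'M[R]_3) (v : 'cV[R]_3 * R)
  : 'cV[R]_3 * R := (S *m v.1, v.2).

(* Main.v *)
Require Import Defs.
From HB Require Import structures.
From mathcomp Require Import all_boot all_order all_algebra.
From mathcomp Require Import reals ring lra.
From Stdlib Require Import Classical.
Import Order.TTheory GRing.Theory Num.Theory.
Local Open Scope ring_scope.
Set Implicit Arguments. Unset Strict Implicit.

Section Helpers.
Variable R : realType.
Definition vec (a b c : R) : 'cV[R]_3 := \col_(i < 3) nth 0 [:: a; b; c] i.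
Definition mx3 (rows : seq (seq R)) : 'M[R]_3 :=
  \matrix_(i < 3, j < 3) nth 0 (nth [::] rows i) j.
Definition P3 := mx3 [:: [:: 0; 0; 1]; [:: 1; 0; 0]; [:: 0; 1; 0]].
Definition D1 := mx3 [:: [:: 1; 0; 0]; [:: 0; -1; 0]; [:: 0; 0; -1]].
Definition D2 := mx3 [:: [:: -1; 0; 0]; [:: 0; 1; 0]; [:: 0; 0; -1]].
Definition D3 := mx3 [:: [:: -1; 0; 0]; [:: 0; -1; 0]; [:: 0; 0; 1]].
Definition Rot (c s : R) := mx3 [:: [:: c; -s; 0]; [:: s; c; 0]; [:: 0; 0; 1]].

Ltac mxsolve := apply/matrixP; case=> [[|[|[|i]]] Hi]; case=> [[|j] Hj];
  rewrite !mxE ?big_ord_recl ?big_ord0 ?mxE //=.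
Ltac mxsolve3 := apply/matrixP; case=> [[|[|[|i]]] Hi]; case=> [[|[|[|j]]] Hj];
  rewrite !mxE ?big_ord_recl ?big_ord0 ?mxE //=.

Lemma det3 (A : 'M[R]_3) : \det A =
  A 0 0 * (A 1 1 * A 2 2 - A 1 2 * A 2 1)
  - A 0 1 * (A 1 0 * A 2 2 - A 1 2 * A 2 0)
  + A 0 2 * (A 1 0 * A 2 1 - A 1 1 * A 2 0).
Proof.
rewrite (expand_det_row _ ord0) !big_ord_recl big_ord0 /cofactor.
rewrite !(expand_det_row _ ord0) !big_ord_recl !big_ord0 /cofactor !det_mx11 !mxE /=.
have [f E] : exists f : nat -> nat -> R, forall i j, A i j = f i j.
  by exists (fun i j => A (inord i) (inord j)) => i j; rewrite !inord_val.
rewrite !E /=. rewrite !expr0 !expr1. ring.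
Qed.

Lemma SO3_Rot c s : c ^+ 2 + s ^+ 2 = 1 -> SO3 (Rot c s).
Proof.
move=> h; split; last by rewrite det3 !mxE /=; transitivity (c^+2 + s^+2); [ring|exact h].
by mxsolve3; first [ring | (transitivity (c^+2 + s^+2); [ring|exact h])].
Qed.
Lemma SO3_P3 : SO3 P3.
Proof. split; last by rewrite det3 !mxE /=; ring. by mxsolve3; ring. Qed.
Lemma SO3_D1 : SO3 D1.
Proof. split; last by rewrite det3 !mxE /=; ring. by mxsolve3; ring. Qed.
Lemma SO3_D2 : SO3 D2.
Proof. split; last by rewrite det3 !mxE /=; ring. by mxsolve3; ring. Qed.
Lemma SO3_D3 : SO3 D3.
Proof. split; last by rewrite det3 !mxE /=; ring. by mxsolve3; ring. Qed.

Lemma P3vec a b c : P3 *m vec a b c = vec c a b.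
Proof. by mxsolve; ring. Qed.
Lemma Rotvec c s d : Rot c s *m vec d 0 0 = vec (c * d) (s * d) 0.
Proof. by mxsolve; ring. Qed.
Lemma vecB a b c a' b' c' : vec a b c - vec a' b' c' = vec (a-a') (b-b') (c-c').
Proof. by mxsolve. Qed.
Lemma vec_eq (y : 'cV[R]_3) : y = vec (y 0 0) (y 1 0) (y 2 0).
Proof. by mxsolve; congr (y _ _); apply: val_inj. Qed.
Lemma vecD a b c a' b' c' : vec a b c + vec a' b' c' = vec (a+a') (b+b') (c+c').
Proof. by mxsolve. Qed.
Lemma P3x (x : 'cV[R]_3) : P3 *m x = vec (x 2 0) (x 0 0) (x 1 0).
Proof. by rewrite {1}(vec_eq x) P3vec. Qed.
Lemma vec0 : vec 0 0 0 = 0.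
Proof. by mxsolve. Qed.
Lemma D4 (x : 'cV[R]_3) : (D2 *m x - x) + (D3 *m x - x) - (D1 *m x - x)
   = vec (-4 * x 0 0) 0 0.
Proof. rewrite [x in LHS]vec_eq; set a := x 0 0; set b := x 1 0; set c := x 2 0.
by mxsolve; ring. Qed.
End Helpers.
Arguments vec {R}. Arguments mx3 {R}. Arguments P3 {R}. Arguments D1 {R}. Arguments D2 {R}. Arguments D3 {R}.
Arguments SO3_P3 {R}. Arguments SO3_D1 {R}. Arguments SO3_D2 {R}. Arguments SO3_D3 {R}.

Theorem proposition3p2 (R : realType) (Lam : 'cV[R]_3 * R -> Prop) :
  add_subgroup Lam ->
  ((forall S : 'M[R]_3, SO3 S -> forall v, Lam v -> Lam (Sigma S v)) <->
   exists H : R -> Prop, add_subgroup H /\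
     ((forall v, Lam v <-> (v.1 = 0 /\ H v.2)) \/
      (forall v, Lam v <-> H v.2))).
Proof.
move=> [H0 Hsub]; split; last first.
  move=> [H [HH [E|E]]] S HS v Lv.
    by apply/E; move/E: Lv => [e h]; rewrite /Sigma /= e mulmx0.
  by apply/E; move/E: Lv.
move=> Hinv.
pose L0 := fun y => Lam (y, 0).
have L0sub : forall y z, L0 y -> L0 z -> L0 (y - z).
  move=> y z Hy Hz; have := Hsub _ _ Hy Hz.
  by rewrite /L0 (_ : ((y, 0) - (z, 0) : 'cV[R]_3 * R) = (y - z, 0 - 0)) // subrr.
have L00 : L0 0 by exact: H0.
have L0add : forall y z, L0 y -> L0 z -> L0 (y + z).
  move=> y z Hy Hz; rewrite -[z]opprK -[- z]sub0r; exact: L0sub Hy (L0sub _ _ L00 Hz).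
have Ldiff : forall x t S, Lam (x, t) -> SO3 S -> L0 (S *m x - x).
  move=> x t S Hx HS; have := Hsub _ _ (Hinv S HS _ Hx) Hx.
  by rewrite /L0 /Sigma /= (_ : ((S *m x, t) - (x, t) : 'cV[R]_3 * R) = (S *m x - x, t - t)) // subrr.
have LA : forall x t, Lam (x, t) -> L0 (vec (-4 * x 0 0) 0 0).
  move=> x t Hx; rewrite -D4; apply: L0sub; first apply: L0add.
  - exact: Ldiff Hx SO3_D2.
  - exact: Ldiff Hx SO3_D3.
  - exact: Ldiff Hx SO3_D1.
have Lmul : forall w, L0 (vec w 0 0) -> forall n, L0 (vec (w *+ n) 0 0).
  move=> w Hw; elim=> [|n IH]; first by rewrite mulr0n vec0.
  have -> : vec (w *+ n.+1) 0 0 = vec w 0 0 + vec (w *+ n) 0 0 by rewrite vecD !addr0 mulrS.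
  exact: L0add.
have LB : forall d, d != 0 -> L0 (vec d 0 0) -> forall u, L0 (vec u 0 0).
  move=> d dn0 Hd u.
  pose n := Num.bound `|u / (2 * d)|.
  have hn : `|u / (2 * d)| < n%:R by apply: archi_boundP.
  have n0 : n%:R != 0 :> R by rewrite gt_eqF // (le_lt_trans _ hn).
  pose c := u / (2 * d) / n%:R.
  have hc : `|c| < 1.
    rewrite /c normrM normfV normr_nat ltr_pdivrMr ?mul1r //.
  have hc2 : 0 <= 1 - c ^+ 2.
    move: hc; rewrite ltr_norml => /andP [h1 h2]; nra.
  pose s := Num.sqrt (1 - c ^+ 2).
  have hs : c ^+ 2 + s ^+ 2 = 1 by rewrite sqr_sqrtr //; ring.
  have hs' : c ^+ 2 + (- s) ^+ 2 = 1 by rewrite sqrrN.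
  have := L0add _ _ (Hinv _ (SO3_Rot hs) _ Hd) (Hinv _ (SO3_Rot hs') _ Hd).
  rewrite /Sigma /= !Rotvec vecD mulNr addrN addr0 => H2.
  have := Lmul _ H2 n.
  congr (L0 (vec _ _ _)).
  rewrite -mulr_natr /c; field.
  by rewrite n0 dn0.
have Key : (exists v, Lam v /\ v.1 <> 0) -> forall y, L0 y.
  move=> [[x t] [Hv /= hx]].
  have Hv1 := Hinv _ SO3_P3 _ Hv; have Hv2 := Hinv _ SO3_P3 _ Hv1.
  rewrite /Sigma /= in Hv1 Hv2.
  have A0 := LA _ _ Hv; have A1 := LA _ _ Hv1; have A2 := LA _ _ Hv2.
  rewrite P3x mxE /= in A1; rewrite !P3x !mxE /= in A2.
  have n4 : (-4 : R) != 0 by rewrite oppr_eq0 pnatr_eq0.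
  have [d [dn0 Hd]] : exists d, d != 0 /\ L0 (vec d 0 0).
    case: (eqVneq (x 0 0) 0) => h0; last by exists (-4 * x 0 0); rewrite mulf_neq0.
    case: (eqVneq (x 1 0) 0) => h1; last by exists (-4 * x 1 0); rewrite mulf_neq0.
    case: (eqVneq (x 2 0) 0) => h2; last by exists (-4 * x 2 0); rewrite mulf_neq0.
    by exfalso; apply: hx; rewrite (vec_eq x) h0 h1 h2 vec0.
  move=> y; rewrite (vec_eq y).
  have Hu := LB _ dn0 Hd.
  have Hy2 : L0 (vec 0 (y 1 0) 0).
    have := Hinv _ SO3_P3 _ (Hu (y 1 0)).
    by rewrite /Sigma /= !P3vec.
  have Hy3 : L0 (vec 0 0 (y 2 0)).
    have := Hinv _ SO3_P3 _ (Hinv _ SO3_P3 _ (Hu (y 2 0))).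
    by rewrite /Sigma /= !P3vec.
  have := L0add _ _ (L0add _ _ (Hu (y 0 0)) Hy2) Hy3.
  by rewrite !vecD !addr0 !add0r.
have HH : add_subgroup (fun t => Lam (0, t)).
  split; first exact: H0.
  move=> a b ha hb; have := Hsub _ _ ha hb.
  by rewrite (_ : ((0, a) - (0, b) : 'cV[R]_3 * R) = (0 - 0, a - b)) // subrr.
exists (fun t => Lam (0, t)); split => //.
case: (classic (exists v, Lam v /\ v.1 <> 0)) => [Hex | Hno].
  right => [[y t]] /=; split => h.
    have := Hsub _ _ h (Key Hex y).
    by rewrite (_ : ((y, t) - (y, 0) : 'cV[R]_3 * R) = (y - y, t - 0)) // subrr subr0.
  have := Hsub _ _ h (Key Hex (0 - y)).
  by rewrite (_ : ((0, t) - (0 - y, 0) : 'cV[R]_3 * R) = (0 - (0 - y), t - 0)) // subr0 !sub0r opprK.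
left => [[y t]] /=; split.
  move=> h; have e : y = 0.
    by apply: NNPP => hy; apply: Hno; exists (y, t).
  by subst y.
by move=> [-> h].
Qed.
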